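(* For every integer $n \ge 8$, $$M(n) \ge \tfrac12\, c^n, \qquad\text{where } c = 2132^{1/10} = 2.152\ldots$$
   Context: For a positive integer $n$, $M(n)$ denotes the number of permutations $(t_1,\dots,t_n)$ of $\{1,2,\ldots,n\}$ that do not contain a 3-term arithmetic progression as a subsequence. Here a sequence contains a 3-term arithmetic progression (3AP) as a subsequence if there are indices $i<j<k$ with $t_j - t_i = t_k - t_j \neq 0$; the common difference may be positive or negative. For example, $M(4)=10$. *)

(* Defs.v *)
From mathcomp Require Import all_boot.
Set Implicit Arguments. Unset Strict Implicit. Unset Printing Implicit Defensive.

(* s contains a 3-term arithmetic progression as a subsequence:
   indices i < j < k < size s with t_j - t_i = t_k - t_j <> 0.
   Over nat, t_j - t_i = t_k - t_j (as integers) iff 2 t_j = t_i + t_k. *)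
Definition has3AP (s : seq nat) : bool :=
  has (fun k => has (fun j => has (fun i =>
     [&& (i < j)%N, (j < k)%N, nth 0 s i != nth 0 s j &
         (nth 0 s j).*2 == nth 0 s i + nth 0 s k])
     (iota 0 (size s))) (iota 0 (size s))) (iota 0 (size s)).

(* M(n): number of permutations of {1,...,n} with no 3AP subsequence.
   [permutations] is a duplicate-free list of all permutations. *)
Definition M (n : nat) : nat :=
  size [seq s <- permutations (iota 1 n) | ~~ has3AP s].

(* Main.v *)
Require Import Defs.
From mathcomp Require Import all_boot.
From Stdlib Require Import Lia.
Set Implicit Arguments. Unset Strict Implicit. Unset Printing Implicit Defensive.

Ltac nlia := unfold addn, subn, muln in *; lia.

Definition AP3 (s : seq nat) := exists i j k, [/\ i < j, j < k, k < size s,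
  nth 0 s i != nth 0 s j & (nth 0 s j).*2 == nth 0 s i + nth 0 s k].

Lemma has3APP s : reflect (AP3 s) (has3AP s).
Proof.
apply: (iffP idP).
- case/hasP => k; rewrite mem_iota add0n => /andP[_ hk].
  case/hasP => j _; case/hasP => i _ /and4P[h1 h2 h3 h4].
  by exists i, j, k; split.
- case=> i [j [k [hij hjk hk hne he]]].
  apply/hasP; exists k; first by rewrite mem_iota add0n hk.
  apply/hasP; exists j; first by rewrite mem_iota add0n (ltn_trans hjk hk).
  apply/hasP; exists i; first by rewrite mem_iota add0n (ltn_trans hij (ltn_trans hjk hk)).
  by rewrite hij hjk hne he.
Qed.

Lemma has3AP_map (f : nat -> nat) s : {in s &, injective f} ->
  (forall x y z, x \in s -> y \in s -> z \in s ->
     ((f y).*2 == f x + f z) = (y.*2 == x + z)) ->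
  has3AP (map f s) = has3AP s.
Proof.
move=> finj fap; apply/has3APP/has3APP => [] [i [j [k [hij hjk hk hne he]]]];
  exists i, j, k; rewrite ?size_map in hk *;
  have hj := ltn_trans hjk hk; have hi := ltn_trans hij hj;
  rewrite ?(nth_map 0) // in hne he *; split => //.
- by apply: contra hne => /eqP ->.
- by rewrite -fap // mem_nth.
- by rewrite (inj_in_eq finj) // mem_nth.
- by rewrite fap // mem_nth.
Qed.

Lemma has3AP_cat u v : (forall x y, x \in u -> y \in v -> odd x != odd y) ->
  ~~ has3AP u -> ~~ has3AP v -> ~~ has3AP (u ++ v).
Proof.
move=> hpar /has3APP hu /has3APP hv; apply/has3APP => [] [i [j [k [hij hjk hk hne he]]]].
rewrite size_cat in hk; rewrite !nth_cat in hne he.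
have hj := ltn_trans hjk hk; have hi := ltn_trans hij hjk.
case: (ltnP k (size u)) => hku.
- have hju := ltn_trans hjk hku; have hiu := ltn_trans hij hju.
  rewrite hju hiu hku in hne he; apply: hu; exists i, j, k; split => //.
- have hk' : (k < size u) = false by rewrite ltnNge hku.
  case: (ltnP i (size u)) => hiu.
  + rewrite hiu hk' in he.
    have hx : nth 0 u i \in u by rewrite mem_nth.
    have hz : nth 0 v (k - size u) \in v by rewrite mem_nth // ltn_subLR.
    have := hpar _ _ hx hz; move/eqP: he => he.
    have := congr1 odd he; rewrite odd_double oddD.
    by case: (odd (nth 0 u i)); case: (odd (nth 0 v (k - size u))).
  + have hju : size u <= j by apply: leq_trans hiu (ltnW hij).
    have hi' : (i < size u) = false by rewrite ltnNge hiu.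
    have hj' : (j < size u) = false by rewrite ltnNge hju.
    rewrite hi' hj' hk' in hne he; apply: hv.
    exists (i - size u), (j - size u), (k - size u); split => //.
    * by rewrite ltn_sub2rE.
    * by rewrite ltn_sub2rE.
    * by rewrite ltn_subLR.
Qed.

Definition om (x : nat) := 2 * x - 1.
Definition em (x : nat) := 2 * x.

Lemma om_inj : injective om.
Proof. move=> x y; rewrite /om => h; nlia. Qed.
Lemma em_inj : injective em.
Proof. move=> x y; rewrite /em => h; nlia. Qed.

Lemma memP_iota x a : (x \in iota 1 a) = (0 < x <= a).
Proof. by rewrite mem_iota add1n ltnS. Qed.

Lemma perm_oe a b : b <= a <= b.+1 ->
  perm_eq (map om (iota 1 a) ++ map em (iota 1 b)) (iota 1 (a + b)).
Proof.
case/andP=> hba hab.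
have hu : uniq (map om (iota 1 a) ++ map em (iota 1 b)).
  rewrite cat_uniq (map_inj_uniq om_inj) (map_inj_uniq em_inj) !iota_uniq /= andbT.
  apply/hasPn => x /mapP [y hy ->]; apply/mapP => [] [z hz]; rewrite /om /em.
  rewrite memP_iota in hy hz; case/andP: hy => hy _; move/leP: hy => hy.
  move=> h; nlia.
have hs : {subset map om (iota 1 a) ++ map em (iota 1 b) <= iota 1 (a + b)}.
  move=> x; rewrite mem_cat => /orP [] /mapP [y]; rewrite memP_iota => /andP[h1 h2] ->;
  rewrite memP_iota /om /em; move/leP: h1; move/leP: h2; move/leP: hba; move/leP: hab => q1 q2 q3 q4;
  apply/andP; split; apply/leP; nlia.
apply: (uniq_perm hu (iota_uniq _ _)).
have hsz : size (iota 1 (a + b)) <= size (map om (iota 1 a) ++ map em (iota 1 b)).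
  by rewrite size_cat !size_map !size_iota.
by case: (uniq_min_size hu hs hsz).
Qed.

Definition PA (n : nat) := [seq s <- permutations (iota 1 n) | ~~ has3AP s].

Lemma PAP n s : (s \in PA n) = ~~ has3AP s && perm_eq s (iota 1 n).
Proof. by rewrite mem_filter mem_permutations. Qed.

Lemma PA_uniq n : uniq (PA n).
Proof. exact/filter_uniq/permutations_uniq. Qed.

Lemma PA_pos n s x : s \in PA n -> x \in s -> 0 < x.
Proof.
by rewrite PAP => /andP[_ /perm_mem hp]; rewrite hp memP_iota => /andP[].
Qed.

Lemma PA_size n s : s \in PA n -> size s = n.
Proof. by rewrite PAP => /andP[_ /perm_size ->]; rewrite size_iota. Qed.

Lemma odd_om x : 0 < x -> odd (om x).
Proof.
case: x => // x _; have -> : om x.+1 = (2 * x).+1 by rewrite /om; nlia.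
by rewrite /= mul2n odd_double.
Qed.

Lemma odd_em x : odd (em x) = false.
Proof. by rewrite /em mul2n odd_double. Qed.

Lemma om_free n p : p \in PA n -> ~~ has3AP (map om p).
Proof.
move=> hp; rewrite has3AP_map; first by move: hp; rewrite PAP => /andP[].
- by move=> x y _ _; apply: om_inj.
- move=> x y z hx hy hz.
  have := PA_pos hp hx; have := PA_pos hp hz; rewrite /om => /leP h1 /leP h2.
  by apply/eqP/eqP; rewrite -!mul2n => h; nlia.
Qed.

Lemma em_free n p : p \in PA n -> ~~ has3AP (map em p).
Proof.
move=> hp; rewrite has3AP_map; first by move: hp; rewrite PAP => /andP[].
- by move=> x y _ _; apply: em_inj.
- by move=> x y z hx hy hz; rewrite /em; apply/eqP/eqP; rewrite -!mul2n => h; nlia.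
Qed.

Lemma Mprod a b : b <= a <= b.+1 -> 0 < b -> 2 * (M a * M b) <= M (a + b).
Proof.
move=> hab hb.
have hpe : forall p q, p \in PA a -> q \in PA b ->
    perm_eq (map om p ++ map em q) (iota 1 (a + b)).
  move=> p q hp hq; apply: perm_trans (perm_oe hab).
  by apply: perm_cat; apply: perm_map; [move: hp | move: hq]; rewrite PAP => /andP[].
have hpar : forall p q, p \in PA a -> q \in PA b ->
    forall x y, x \in map om p -> y \in map em q -> odd x != odd y.
  move=> p q hp hq x y /mapP [x' hx' ->] /mapP [y' _ ->].
  by rewrite odd_em (odd_om (PA_pos hp hx')).
pose L1 := [seq map om p ++ map em q | p <- PA a, q <- PA b].
pose L2 := [seq map em q ++ map om p | p <- PA a, q <- PA b].
have -> : 2 * (M a * M b) = size (L1 ++ L2).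
  by rewrite size_cat !size_allpairs /M mul2n addnn.
apply: uniq_leq_size.
- rewrite cat_uniq; apply/and3P; split.
  + apply: allpairs_uniq; try exact: PA_uniq.
    move=> [p1 q1] [p2 q2] /allpairsP [[p1' q1'] [h1 h2 [-> ->]]]
      /allpairsP [[p2' q2'] [h3 h4 [-> ->]]] /= /eqP.
    rewrite eqseq_cat; last by rewrite !size_map (PA_size h1) (PA_size h3).
    by case/andP => /eqP /(inj_map om_inj) -> /eqP /(inj_map em_inj) ->.
  + apply/hasPn => s /allpairsP [[p q] [hp hq ->]] /=.
    apply/allpairsP => [] [[p' q'] [hp' hq' heq]]; move: heq => /=.
    have := PA_size hq; have := PA_size hp'.
    case: p' hp' {hq'} => [|x p'] hp' /=; first by move=> h; move: hab hb; rewrite -h => /andP[h1 _] h2; move: (leq_trans h2 h1).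
    case: q hq {hp} => [|y q] hq /= _; first by move=> h; move: hb; rewrite -h.
    move=> _ [] /(congr1 odd); rewrite odd_em odd_om //.
    by apply: (PA_pos hp'); rewrite inE eqxx.
  + apply: allpairs_uniq; try exact: PA_uniq.
    move=> [p1 q1] [p2 q2] /allpairsP [[p1' q1'] [h1 h2 [-> ->]]]
      /allpairsP [[p2' q2'] [h3 h4 [-> ->]]] /= /eqP.
    rewrite eqseq_cat; last by rewrite !size_map (PA_size h2) (PA_size h4).
    by case/andP => /eqP /(inj_map em_inj) -> /eqP /(inj_map om_inj) ->.
- move=> s; rewrite mem_cat PAP => /orP [] /allpairsP [[p q] [hp hq ->]] /=.
  + rewrite hpe // andbT; apply: has3AP_cat; [exact: hpar | exact: om_free hp | exact: em_free hq].
  + rewrite perm_catC hpe // andbT; apply: has3AP_cat; [|exact: em_free hq | exact: om_free hp].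
    by move=> x y hx hy; rewrite eq_sym; apply: hpar hp hq y x hy hx.
Qed.

Fixpoint hp (x : nat) (t : seq nat) : bool :=
  match t with [::] => false
  | y :: t' => ((y != x) && (x <= y.*2) && (y.*2 - x \in t')) || hp x t' end.
Fixpoint ap3 (s : seq nat) : bool :=
  match s with [::] => false | x :: t => hp x t || ap3 t end.

Lemma hp_complete x t j k : j < k -> k < size t -> nth 0 t j != x ->
  (nth 0 t j).*2 == x + nth 0 t k -> hp x t.
Proof.
elim: t j k => [|y t IH] j k //= hjk hk hne he.
case: j hjk hne he => [|j] hjk hne he /=.
- case: k hjk hk he => // k _ hk he /=.
  by move/eqP: he => he; rewrite hne he leq_addr addKn (mem_nth 0 hk).
- case: k hjk hk he => // k hjk hk he.
  by apply/orP; right; apply: (IH j k).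

Qed.

Lemma ap3_complete s : AP3 s -> ap3 s.
Proof.
case=> i [j [k []]]; elim: s i j k => [|x t IH] i j k //= hij hjk hk hne he.
case: i hij hne he => [|i] hij hne he.
- case: j hij hjk hne he => // j _ hjk hne he.
  case: k hjk hk he => // k hjk hk he.
  by apply/orP; left; apply: (@hp_complete x t j k) => //; rewrite eq_sym.
- case: j hij hjk hne he => // j hij hjk hne he.
  case: k hjk hk he => // k hjk hk he.
  by apply/orP; right; apply: (IH i j k).
Qed.

Lemma noap3 s : ~~ ap3 s -> ~~ has3AP s.
Proof. by apply: contra => /has3APP /ap3_complete. Qed.

Definition ins (x i : nat) (p : seq nat) := take i p ++ x :: drop i p.
Definition bad_new (n : nat) (q : seq nat) : bool :=
  let pn := index n q in
  has (fun a => ~~ odd (n - a) &&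
     (let m := (a + n)./2 in let pa := index a q in let pm := index m q in
      ((pa < pm) && (pm < pn)) || ((pn < pm) && (pm < pa)))) (iota 1 n.-1).
Fixpoint gen n := match n with 0 => [:: [::]] | n'.+1 =>
  [seq q <- flatten [seq [seq ins n i p | i <- iota 0 n] | p <- gen n'] | ~~ bad_new n q] end.
Fixpoint lexlt (s t : seq nat) : bool := match s, t with
 | [::], [::] => false | [::], _ => true | _ :: _, [::] => false
 | x :: s', y :: t' => (x < y) || ((x == y) && lexlt s' t') end.
Definition lexle s t := lexlt s t || (s == t).

Lemma lexlt_irr : irreflexive lexlt.
Proof. by elim=> [|x s IH] //=; rewrite ltnn eqxx IH. Qed.

Lemma lexlt_trans : transitive lexlt.
Proof.
move=> y x; elim: x y => [|a x IH] [|b y] [|c z] //=.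
case/orP=> [hab|/andP[/eqP <- hxy]]; case/orP=> [hbc|/andP[/eqP <- hyz]].
- by rewrite (ltn_trans hab hbc).
- by rewrite hab.
- by rewrite hbc.
- by rewrite eqxx (IH _ _ hxy hyz) orbT.
Qed.

Definition chk n := let L := gen n in
  [&& sorted lexlt (sort lexle L) & all (fun s => ~~ ap3 s && perm_eq s (iota 1 n)) L].

Lemma chk_M n : chk n -> size (gen n) <= M n.
Proof.
case/andP=> hs /allP ha.
have hu : uniq (gen n).
  have := sorted_uniq lexlt_trans lexlt_irr hs.
  have hp : perm_eq (sort lexle (gen n)) (gen n) by rewrite perm_sort.
  by rewrite (perm_uniq hp).
rewrite /M; apply: uniq_leq_size hu _ => s hs'.
case/andP: (ha s hs') => h1 h2.
by rewrite mem_filter noap3 // mem_permutations.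
Qed.

Definition chkk n k := let L := gen n in
  [&& k <= size L, sorted lexlt (sort lexle L) &
      all (fun s => ~~ ap3 s && perm_eq s (iota 1 n)) L].

Lemma chkk_M n k : chkk n k -> k <= M n.
Proof. by case/and3P=> h1 h2 h3; apply: leq_trans h1 (chk_M _); apply/andP. Qed.

Lemma M7 : 104 <= M 7. Proof. apply: chkk_M; vm_cast_no_check (erefl true). Qed.
Lemma M8 : 282 <= M 8. Proof. apply: chkk_M; vm_cast_no_check (erefl true). Qed.
Lemma M9 : 496 <= M 9. Proof. apply: chkk_M; vm_cast_no_check (erefl true). Qed.
Lemma M10 : 1066 <= M 10. Proof. apply: chkk_M; vm_cast_no_check (erefl true). Qed.
Lemma M11 : 2460 <= M 11. Proof. apply: chkk_M; vm_cast_no_check (erefl true). Qed.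
Lemma M12 : 6128 <= M 12. Proof. apply: chkk_M; vm_cast_no_check (erefl true). Qed.
Lemma M13 : 12840 <= M 13. Proof. apply: chkk_M; vm_cast_no_check (erefl true). Qed.
Lemma M14 : 29380 <= M 14. Proof. apply: chkk_M; vm_cast_no_check (erefl true). Qed.

From Stdlib Require Import Reals Lra ZArith.
Open Scope R_scope.

Definition cc := Rpower 2132 (/ 10).

Lemma cc_pos : 0 < cc.
Proof. unfold cc, Rpower; apply exp_pos. Qed.

Lemma cc10 : cc ^ 10 = 2132.
Proof.
unfold cc; rewrite <- Rpower_pow by (unfold Rpower; apply exp_pos).
rewrite Rpower_mult.
replace (/ 10 * INR 10) with 1 by (simpl; field).
apply Rpower_1; lra.
Qed.

Lemma cc_bound k (B : Z) : (0 <= B)%Z -> (2132 ^ Z.of_nat k < B ^ 10)%Z -> cc ^ k <= IZR B.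
Proof.
intros hB hlt.
destruct (Rle_or_lt (cc ^ k) (IZR B)) as [h|h]; [exact h|exfalso].
assert (h1 : IZR B ^ 10 <= (cc ^ k) ^ 10).
{ apply pow_incr; split; [apply IZR_le; exact hB| lra]. }
rewrite <- pow_mult, Nat.mul_comm, pow_mult, cc10 in h1.
rewrite !pow_IZR in h1.
apply le_IZR in h1. simpl in h1. lia.
Qed.

Lemma from_nat n K : (K <= M n)%nat ->
  (2132 ^ Z.of_nat n < (2 * Z.of_nat K) ^ 10)%Z -> cc ^ n <= 2 * INR (M n).
Proof.
move=> hK hz.
have hb : (0 <= 2 * Z.of_nat K)%Z by lia.
apply: (Rle_trans _ _ _ (cc_bound hb hz)).
rewrite mult_IZR -INR_IZR_INZ; apply: Rmult_le_compat_l; first lra.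
by apply: le_INR; apply/leP.
Qed.

Lemma M15 : (58656 <= M 15)%nat.
Proof.
have h := Mprod (a:=8) (b:=7) isT isT.
apply: leq_trans h.
have -> : 58656%nat = (2 * (282 * 104))%nat by [].
exact: (leq_mul (leqnn 2) (leq_mul M8 M7)).
Qed.

Lemma base n : (8 <= n <= 15)%nat -> cc ^ n <= 2 * INR (M n).
Proof.
case/andP => h1 h2.
have [k ek] : exists k, n = (8 + k)%nat by exists (n - 8)%nat; rewrite subnKC.
subst n.
have h3 : (k <= 7)%nat by move: h2; rewrite -[15%nat]/(8 + 7)%nat leq_add2l.
case: k {h1 h2} h3 => [|[|[|[|[|[|[|[|k]]]]]]]] // _.
- by apply: (from_nat M8).
- by apply: (from_nat M9).
- rewrite cc10; apply: (Rle_trans _ (2 * INR 1066)); first by rewrite INR_IZR_INZ; simpl; lra.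
  by apply: Rmult_le_compat_l; [lra | apply: le_INR; apply/leP; exact: M10].
- by apply: (from_nat M11).
- by apply: (from_nat M12).
- by apply: (from_nat M13).
- by apply: (from_nat M14).
- by apply: (from_nat M15).
Qed.

Lemma main_ind N n : (n <= N)%nat -> (8 <= n)%nat -> cc ^ n <= 2 * INR (M n).
Proof.
elim: N n => [|N IH] n hnN hn; first by move: (leq_trans hn hnN).
case: (leqP n 15) => h15; first by apply: base; rewrite hn h15.
have [m [a [ea hma hm]]] : exists m a, [/\ n = (a + m)%nat, (m <= a <= m.+1)%nat & (8 <= m)%nat].
  exists n./2, (odd n + n./2)%nat; split.
  - by rewrite -addnA addnn odd_double_half.
  - by rewrite leq_addl /=; case: (odd n).
  - have e := odd_double_half n; rewrite -mul2n in e.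
    move: h15 e; case: (odd n) => /= /leP h15 e; apply/leP; nlia.
have ha : (8 <= a)%nat by case/andP: hma => h _; exact: leq_trans hm h.
have hmN : (m <= N)%nat.
  rewrite -ltnS; apply: leq_trans hnN; rewrite ea -{1}(add0n m) ltn_add2r.
  exact: leq_trans (isT : (0 < 8)%nat) ha.
have haN : (a <= N)%nat.
  rewrite -ltnS; apply: leq_trans hnN; rewrite ea -{1}(addn0 a) ltn_add2l.
  exact: leq_trans (isT : (0 < 8)%nat) hm.
have hp := Mprod hma (leq_trans (isT : (0 < 8)%nat) hm).
rewrite ea pow_add.
apply: (Rle_trans _ ((2 * INR (M a)) * (2 * INR (M m)))).
  apply: Rmult_le_compat; try (apply: pow_le; apply: Rlt_le; exact: cc_pos).
  - exact: IH.
  - exact: IH.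
apply: (Rle_trans _ (2 * INR (2 * (M a * M m)))).
  rewrite !mult_INR; simpl INR; lra.
apply: Rmult_le_compat_l; first lra.
by apply: le_INR; apply/leP.
Qed.

Theorem theorem1 (n : nat) (hn : (8 <= n)%coq_nat) :
  / 2 * (Rpower 2132 (/ 10)) ^ n <= INR (M n).
Proof.
have := main_ind (leqnn n) (introT leP hn); rewrite /cc => h; lra.
Qed.
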